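(* Let $T$ be the set of $(a_0,\dots,a_9)\in\mathbb{R}^{10}$ such that $P(x,a)=x^{11}-x^{10}+a_9x^9+\cdots+a_0$ satisfies $a_9,a_8,a_7,a_6<0$, $a_5,\dots,a_1>0$, $a_0<0$ and has exactly one positive and exactly eight negative roots, all simple. Suppose $T\ne\emptyset$, let $\Gamma$ be a connected component of $T$, $\bar\Gamma$ its closure, and let $H$ be the set of polynomials $P(x,a)$, $a\in\bar\Gamma$, all of whose roots are real. Then $H$ contains no polynomial having one triple positive root and negative roots of total multiplicity $8$. *)

(* Defs.v *)
From HB Require Import structures.
From mathcomp Require Import all_boot all_order all_algebra.
From mathcomp Require Import all_classical all_reals all_analysis.
Set Implicit Arguments. Unset Strict Implicit. Unset Printing Implicit Defensive.
Import Order.TTheory GRing.Theory Num.Theory.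
Import numFieldNormedType.Exports.
Local Open Scope ring_scope.
Local Open Scope classical_set_scope.

Definition Pa (R : realType) (a : 'rV[R]_10) : {poly R} :=
  'X^11 - 'X^10 + \sum_(i < 10) a ord0 i *: 'X^i.

Definition sign_pattern (R : realType) (a : 'rV[R]_10) : Prop :=
  (forall i : 'I_10, (6 <= (i : nat))%N -> a ord0 i < 0) /\
  (forall i : 'I_10, (1 <= (i : nat) <= 5)%N -> 0 < a ord0 i) /\
  a ord0 (inord 0) < 0.

Definition root_pattern (R : realType) (p : {poly R}) : Prop :=
  (exists y : R, 0 < y /\ forall x : R, 0 < x -> (root p x <-> x = y)) /\
  (exists s : seq R, [/\ uniq s, size s = 8%N, all (fun x => x < 0) s &
      forall x : R, x < 0 -> (root p x <-> x \in s)]) /\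
  (forall x : R, root p x -> mup x p = 1%N).

Definition Tset (R : realType) : set 'rV[R]_10 :=
  [set a | sign_pattern a /\ root_pattern (Pa a)].

Definition all_roots_real (R : realType) (p : {poly R}) (rs : seq R) : Prop :=
  p = \prod_(r <- rs) ('X - r%:P).

Definition triple_pos_eight_neg (R : realType) (rs : seq R) : Prop :=
  (exists y : R, 0 < y /\ count (fun r => r == y) rs = 3%N) /\
  count (fun r => 0 < r) rs = 3%N /\
  count (fun r => r < 0) rs = 8%N.

(* Main.v *)
Require Import Defs.
From HB Require Import structures.
From mathcomp Require Import all_boot all_order all_algebra.
From mathcomp Require Import all_classical all_reals all_analysis.
From mathcomp Require Import ring lra zify.
Import Order.TTheory GRing.Theory Num.Theory.
Import numFieldNormedType.Exports.
Local Open Scope ring_scope.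
Local Open Scope classical_set_scope.

Lemma cont_entry (R : realType) (i : 'I_10) :
  continuous (fun M : 'rV[R]_10 => M ord0 i).
Proof.
move=> u A /nbhs_ballP[e /= e0 eA].
apply/nbhs_ballP; exists e => //= v [_ uv]; apply: eA; exact: uv.
Qed.

Lemma closed_entry_le (R : realType) (i : 'I_10) :
  closed [set M : 'rV[R]_10 | M ord0 i <= 0].
Proof.
have := (proj1 (continuous_closedP _) (@cont_entry R i)) _ (@closed_le R 0).
by [].
Qed.

Lemma closed_entry_ge (R : realType) (i : 'I_10) :
  closed [set M : 'rV[R]_10 | 0 <= M ord0 i].
Proof.
have := (proj1 (continuous_closedP _) (@cont_entry R i)) _ (@closed_ge R 0).
by [].
Qed.

Lemma closure_signs (R : realType) (a0 a : 'rV[R]_10)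
  (Ha : closure (connected_component (@Tset R) a0) a) :
  (forall i : 'I_10, (6 <= (i : nat))%N -> a ord0 i <= 0) /\
  (forall i : 'I_10, (1 <= (i : nat) <= 5)%N -> 0 <= a ord0 i).
Proof.
have sub : closure (connected_component (@Tset R) a0) `<=` closure (@Tset R).
  by apply: closureS; apply: connected_component_sub.
split=> i hi.
- have S : @Tset R `<=` [set M : 'rV[R]_10 | M ord0 i <= 0].
    by move=> M [[h1 _] _]; apply/ltW/h1.
  have := closureS S (sub _ Ha).
  by rewrite -(proj1 (closure_id _) (@closed_entry_le R i)).
- have S : @Tset R `<=` [set M : 'rV[R]_10 | 0 <= M ord0 i].
    by move=> M [[_ [h1 _]] _]; apply/ltW/h1.
  have := closureS S (sub _ Ha).
  by rewrite -(proj1 (closure_id _) (@closed_entry_ge R i)).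
Qed.


Lemma coefXsubCM (R : realType) (x : R) (p : {poly R}) i :
  (('X - x%:P) * p)`_i = (if i == 0%N then 0 else p`_i.-1) - x * p`_i.
Proof. by rewrite mulrBl coefB coefXM coefCM. Qed.

Lemma prod_neg_coef (R : realType) (s : seq R) : all (fun r => r < 0) s ->
  (forall i, 0 <= (\prod_(r <- s) ('X - r%:P))`_i) /\
  0 < (\prod_(r <- s) ('X - r%:P))`_0.
Proof.
elim: s => [|x s IH] /=.
  by rewrite big_nil; split=> [i|]; rewrite coef1 //; case: (i == 0%N).
move=> /andP[hx /IH [H0 H1]]; rewrite big_cons; split.
  move=> [|i] /=; rewrite coefXsubCM /=.
    by rewrite sub0r -mulNr mulr_ge0 // ?oppr_ge0 ?ltW.
  by rewrite -mulNr addr_ge0 // mulr_ge0 // oppr_ge0 ltW.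
by rewrite coefXsubCM /= sub0r -mulNr mulr_gt0 // oppr_gt0.
Qed.

Lemma newton_prod (R : realType) (s : seq R) :
  let p := \prod_(r <- s) ('X - r%:P) in
  0 <= p`_1 ^+ 2 - 2 * p`_0 * p`_2 /\
  p`_1 ^+ 2 <= (size s)%:R * (p`_1 ^+ 2 - 2 * p`_0 * p`_2).
Proof.
elim: s => [|x s IH] /=.
  by rewrite big_nil !coef1 /=; split; rewrite ?mul0r; lra.
move: IH; rewrite big_cons !coefXsubCM /=.
set A := _`_0; set B := _`_1; set C := _`_2.
move=> [h1 h2].
rewrite -addn1 natrD.
set n : R := (size s)%:R.
have {}h2 : B ^+ 2 <= n * (B ^+ 2 - 2 * A * C) by exact: h2.
have n0 : 0 <= n by rewrite /n ler0n.
have key : 0 <= n * A ^+ 2 + 2 * x * A * B + x ^+ 2 * (B ^+ 2 - 2 * A * C).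
  have [n00|nz] := eqVneq n 0.
    rewrite n00 mul0r in h2.
    have hB : B = 0.
      by apply/eqP; rewrite -sqrf_eq0 eq_le sqr_ge0 andbT.
    rewrite n00 hB; nra.
  have np : 0 < n by rewrite lt_def nz n0.
  have : 0 <= n * (n * A ^+ 2 + 2 * x * A * B + x ^+ 2 * (B ^+ 2 - 2 * A * C)).
    have -> : n * (n * A ^+ 2 + 2 * x * A * B + x ^+ 2 * (B ^+ 2 - 2 * A * C))
      = (n * A + x * B) ^+ 2 + x ^+ 2 * (n * (B ^+ 2 - 2 * A * C) - B ^+ 2) by ring.
    by apply: addr_ge0; rewrite ?sqr_ge0 // mulr_ge0 ?sqr_ge0 // subr_ge0.
  by rewrite pmulr_rge0.
split; nra.
Qed.


Lemma coef_Pa (R : realType) (a : 'rV[R]_10) k :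
  (Pa a)`_k = if k == 11%N then 1 else if k == 10%N then -1
              else if (k < 10)%N then a ord0 (inord k) else 0.
Proof.
rewrite /Pa coefD coefB !coefXn coef_sum.
under eq_bigr do rewrite coefZ coefXn.
have -> : \sum_(i < 10) a ord0 i * (k == i)%:R =
          if (k < 10)%N then a ord0 (inord k) else 0.
  case: ltnP => hk.
    rewrite (bigD1 (inord k)) //= inordK // eqxx mulr1 big1 ?addr0 //.
    move=> j /eqP hj; case: eqP => [ekj|]; last by rewrite mulr0.
    by exfalso; apply: hj; apply/val_inj; rewrite /= inordK // ekj.
  rewrite big1 // => j _; case: eqP => [ekj|]; last by rewrite mulr0.
  by have := ltn_ord j; rewrite -ekj ltnNge hk.
case: (eqVneq k 11%N) => [->|h11] //=.
  by rewrite subr0 addr0.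
case: (eqVneq k 10%N) => [->|h10] //=.
  by rewrite sub0r addr0.
by rewrite subrr add0r.
Qed.

Lemma size_Pa (R : realType) (a : 'rV[R]_10) : size (Pa a) = 12%N.
Proof.
apply/eqP; rewrite eqn_leq; apply/andP; split.
  apply/leq_sizeP => j hj; rewrite coef_Pa.
  have -> : (j == 11%N) = false by apply/negbTE; rewrite neq_ltn; apply/orP; right.
  have -> : (j == 10%N) = false by apply/negbTE; rewrite neq_ltn; apply/orP; right; apply: leq_trans hj.
  by have -> : (j < 10)%N = false by apply/negbTE; rewrite -leqNgt; apply: leq_trans hj.
rewrite ltnNge; apply/negP => hs.
have := @coef_Pa R a 11; rewrite eqxx (nth_default _ hs) => /eqP; rewrite eq_sym oner_eq0.
by [].
Qed.


Lemma count_sub_eq (T : eqType) (P Q : pred T) (s : seq T) :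
  (forall x, P x -> Q x) -> count P s = count Q s ->
  forall x, x \in s -> Q x -> P x.
Proof.
move=> PQ; elim: s => [|z s IH] //= hc x.
have sc : (count P s <= count Q s)%N by apply: sub_count => w; apply: PQ.
have hc' : count P s = count Q s.
  case Pz: (P z); first by move: hc; rewrite Pz (PQ _ Pz) /=; lia.
  case Qz: (Q z); move: hc; rewrite Pz Qz /=; lia.
rewrite inE => /orP[/eqP ->|xs] qx; last exact: IH.
case Pz: (P z) => //; move: hc; rewrite Pz qx /=; lia.
Qed.

Theorem lemma10 (R : realType) (a0 : 'rV[R]_10) (Ha0 : @Tset R a0)
  (a : 'rV[R]_10) (Ha : closure (connected_component (@Tset R) a0) a)
  (rs : seq R) (Hreal : all_roots_real (Pa a) rs) :
  ~ triple_pos_eight_neg rs.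
Proof.
move=> [[y [y0 cy]] [cp cn]]; rewrite /all_roots_real in Hreal.
have [Hneg Hpos] := closure_signs _ _ _ Ha.
have szrs : size rs = 11%N.
  have := congr1 (fun p : {poly R} => size p) Hreal; rewrite /=; rewrite size_Pa size_prod_XsubC.
  by move=> [].
have Hin : forall r, r \in rs -> ~~ (r < 0) -> r = y.
  move=> r rin rn.
  have cC : count (fun r => ~~ (r < 0)) rs = 3%N.
    have := count_predC (fun r => r < 0) rs; rewrite szrs cn.
    by move=> h; apply/eqP; rewrite -(eqn_add2l 8) h.
  have r0 : 0 < r.
    apply: (@count_sub_eq _ (fun r => 0 < r) (fun r => ~~ (r < 0)) rs) => //.
      by move=> w /= w0; rewrite -leNgt ltW.
    by rewrite cp cC.
  apply/eqP; apply: (@count_sub_eq _ (fun r => r == y) (fun r => 0 < r) rs) => //.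
    by move=> w /= /eqP ->.
  by rewrite cp cy.
set negs := [seq r <- rs | r < 0].
have szn : size negs = 8%N by rewrite size_filter.
have alln : all (fun r => r < 0) negs by apply: filter_all.
set Q := \prod_(r <- negs) ('X - r%:P).
have HP : Pa a = ('X - y%:P) * (('X - y%:P) * (('X - y%:P) * Q)).
  rewrite Hreal (bigID (fun r => r < 0)) /= -big_filter -/negs -/Q.
  have -> : \prod_(r <- rs | ~~ (r < 0)) ('X - r%:P) = ('X - y%:P) ^+ 3.
    rewrite big_seq_cond (eq_bigr (fun _ => 'X - y%:P)); last first.
      by move=> r /andP[h1 h2]; rewrite (Hin r h1 h2).
    rewrite big_const_seq.
    have -> : count (fun r => (r \in rs) && ~~ (r < 0)) rs = 3%N.
      have := count_predC (fun r => r < 0) rs; rewrite szrs cn => h.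
      have h3 : count (fun r => ~~ (r < 0)) rs = 3%N.
        by apply/eqP; rewrite -(eqn_add2l 8) h.
      by rewrite -h3; apply: eq_in_count => r /= ->.
    by rewrite /= mulr1 !exprS expr0 mulr1.
  ring.
have [Qnn Q0] := prod_neg_coef _ _ alln.
have [_ Nw] := newton_prod _ negs; rewrite szn -/Q in Nw.
have szQ : size Q = 9%N by rewrite size_prod_XsubC szn.
have Q9 : Q`_9 = 0 by rewrite nth_default // szQ.
have Q10 : Q`_10 = 0 by rewrite nth_default // szQ.
have Sp : forall k, (1 <= k <= 5)%N -> 0 <= (Pa a)`_k.
  move=> k hk; rewrite coef_Pa.
  have -> : (k == 11%N) = false by apply/eqP; lia.
  have -> : (k == 10%N) = false by apply/eqP; lia.
  have -> : (k < 10)%N = true by lia.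
  by apply: Hpos; rewrite inordK //; lia.
have Sn : forall k, (7 <= k <= 10)%N -> (Pa a)`_k <= 0.
  move=> k hk; rewrite coef_Pa.
  have -> : (k == 11%N) = false by apply/eqP; lia.
  case: eqP => [_|k10]; first by rewrite lerN10.
  have -> : (k < 10)%N = true by lia.
  by apply: Hneg; rewrite inordK //; lia.
have c10 : (Pa a)`_10 = -1 by rewrite coef_Pa.
have ident : (182%:R * (Pa a)`_1 * Q`_0 * y ^+ 0 + 882%:R * (Pa a)`_1 * Q`_2 * y ^+ 2 + 406%:R * (Pa a)`_2 * Q`_0 * y ^+ 1 + 672%:R * (Pa a)`_3 * Q`_0 * y ^+ 2 + 588%:R * (Pa a)`_3 * Q`_1 * y ^+ 3 + 392%:R * (Pa a)`_4 * Q`_0 * y ^+ 3 + 343%:R * (Pa a)`_4 * Q`_1 * y ^+ 4 + 168%:R * (Pa a)`_5 * Q`_0 * y ^+ 4 + 147%:R * (Pa a)`_5 * Q`_1 * y ^+ 5) - (112%:R * (Pa a)`_7 * Q`_0 * y ^+ 6 + 98%:R * (Pa a)`_7 * Q`_1 * y ^+ 7 + 168%:R * (Pa a)`_8 * Q`_0 * y ^+ 7 + 147%:R * (Pa a)`_8 * Q`_1 * y ^+ 8 + 168%:R * (Pa a)`_9 * Q`_0 * y ^+ 8 + 147%:R * (Pa a)`_9 * Q`_1 * y ^+ 9 + 112%:R * (Pa a)`_10 * Q`_0 * y ^+ 9 + 98%:R * (Pa a)`_10 * Q`_1 * y ^+ 10) + 203%:R * y ^+ 4 * (7%:R * Q`_1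 ^+ 2 - 16%:R * Q`_0 * Q`_2) = 0.
  rewrite HP !coefXsubCM /= Q9 Q10; ring.
have Newt : 0 <= 7%:R * Q`_1 ^+ 2 - 16%:R * Q`_0 * Q`_2.
  by move: Nw; rewrite -mulr_natl; lra.
have strict : 0 < - ((Pa a)`_10 * Q`_0 * y ^+ 9).
  by rewrite c10 -!mulNr opprK mul1r mulr_gt0 // exprn_gt0.
have N4 : 0 <= y ^+ 4 * (7%:R * Q`_1 ^+ 2 - 16%:R * Q`_0 * Q`_2).
  by rewrite mulr_ge0 // exprn_ge0 // ltW.
  have : 0 <= (Pa a)`_1 * Q`_0 * y ^+ 0 by apply: mulr_ge0; first apply: mulr_ge0; [exact: Sp | exact: Qnn | apply: exprn_ge0; exact: ltW].
  have : 0 <= (Pa a)`_1 * Q`_2 * y ^+ 2 by apply: mulr_ge0; first apply: mulr_ge0; [exact: Sp | exact: Qnn | apply: exprn_ge0; exact: ltW].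
  have : 0 <= (Pa a)`_2 * Q`_0 * y ^+ 1 by apply: mulr_ge0; first apply: mulr_ge0; [exact: Sp | exact: Qnn | apply: exprn_ge0; exact: ltW].
  have : 0 <= (Pa a)`_3 * Q`_0 * y ^+ 2 by apply: mulr_ge0; first apply: mulr_ge0; [exact: Sp | exact: Qnn | apply: exprn_ge0; exact: ltW].
  have : 0 <= (Pa a)`_3 * Q`_1 * y ^+ 3 by apply: mulr_ge0; first apply: mulr_ge0; [exact: Sp | exact: Qnn | apply: exprn_ge0; exact: ltW].
  have : 0 <= (Pa a)`_4 * Q`_0 * y ^+ 3 by apply: mulr_ge0; first apply: mulr_ge0; [exact: Sp | exact: Qnn | apply: exprn_ge0; exact: ltW].
  have : 0 <= (Pa a)`_4 * Q`_1 * y ^+ 4 by apply: mulr_ge0; first apply: mulr_ge0; [exact: Sp | exact: Qnn | apply: exprn_ge0; exact: ltW].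
  have : 0 <= (Pa a)`_5 * Q`_0 * y ^+ 4 by apply: mulr_ge0; first apply: mulr_ge0; [exact: Sp | exact: Qnn | apply: exprn_ge0; exact: ltW].
  have : 0 <= (Pa a)`_5 * Q`_1 * y ^+ 5 by apply: mulr_ge0; first apply: mulr_ge0; [exact: Sp | exact: Qnn | apply: exprn_ge0; exact: ltW].
  have : (Pa a)`_7 * Q`_0 * y ^+ 6 <= 0 by apply: mulr_le0_ge0; first apply: mulr_le0_ge0; [exact: Sn | exact: Qnn | apply: exprn_ge0; exact: ltW].
  have : (Pa a)`_7 * Q`_1 * y ^+ 7 <= 0 by apply: mulr_le0_ge0; first apply: mulr_le0_ge0; [exact: Sn | exact: Qnn | apply: exprn_ge0; exact: ltW].
  have : (Pa a)`_8 * Q`_0 * y ^+ 7 <= 0 by apply: mulr_le0_ge0; first apply: mulr_le0_ge0; [exact: Sn | exact: Qnn | apply: exprn_ge0; exact: ltW].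
  have : (Pa a)`_8 * Q`_1 * y ^+ 8 <= 0 by apply: mulr_le0_ge0; first apply: mulr_le0_ge0; [exact: Sn | exact: Qnn | apply: exprn_ge0; exact: ltW].
  have : (Pa a)`_9 * Q`_0 * y ^+ 8 <= 0 by apply: mulr_le0_ge0; first apply: mulr_le0_ge0; [exact: Sn | exact: Qnn | apply: exprn_ge0; exact: ltW].
  have : (Pa a)`_9 * Q`_1 * y ^+ 9 <= 0 by apply: mulr_le0_ge0; first apply: mulr_le0_ge0; [exact: Sn | exact: Qnn | apply: exprn_ge0; exact: ltW].
  have : (Pa a)`_10 * Q`_0 * y ^+ 9 <= 0 by apply: mulr_le0_ge0; first apply: mulr_le0_ge0; [exact: Sn | exact: Qnn | apply: exprn_ge0; exact: ltW].
  have : (Pa a)`_10 * Q`_1 * y ^+ 10 <= 0 by apply: mulr_le0_ge0; first apply: mulr_le0_ge0; [exact: Sn | exact: Qnn | apply: exprn_ge0; exact: ltW].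
  lra.
Qed.
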